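(* Let $V$ be a finite nonempty set and $f:\{0,1\}^V\to\{0,1\}^V$. (1) $f$ is positive-circular if and only if $f$ is an even-self-dual and-net. (2) $f$ is negative-circular if and only if $f$ is an odd-self-dual and-net.
   Context: For $x,y\in\{0,1\}^V$, $x\oplus y$ is componentwise addition mod 2, $1$ is the all-ones point, $\|x\|$ the number of $1$s; $x$ is even (odd) if $\|x\|$ is. The conjugate is $\tilde f(x)=f(x)\oplus x$. $f$ is self-dual if $f(x\oplus1)=f(x)\oplus1$ for all $x$; even (odd) if $\tilde f(\{0,1\}^V)$ is exactly the set of even (odd) points; even-self-dual (odd-self-dual) if both even (odd) and self-dual. For $x^{j\alpha}$ the point equal to $x$ except its $j$-component is $\alpha$, the global interaction graph $G(f)$ is the signed digraph on $V$ with a positive (resp. negative) arc from $j$ to $i$ iff $f_i(x^{j1})-f_i(x^{j0})=1$ (resp. $=-1$) for at least one $x$. $G(f)$ is simple if there is at most one arc from $j$ to $i$ for all $i,j$. $f$ is an and-net if $G(f)$ is simple and for every $i\in V$ and $x$: $f_i(x)=1$ iff $G(f)$ has no positive arc $j\to i$ with $x_j=0$ and no negative arc $j\to i$ with $x_j=1$. A cycle is a subgraph with at most one arc between any ordered pair whose underlying unsigned digraph is a directed cycle; positive (negative) if it has an even (odd) number of negative arcs. $f$ is positive-circular (negative-circular) if $G(f)$ itself is a positive (negative) cycle through all vertices of $V$. *)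

(* Defs.v *)
From mathcomp Require Import all_boot.
Set Implicit Arguments. Unset Strict Implicit. Unset Printing Implicit Defensive.

Section BN.
Variable V : finType.
Notation point := {ffun V -> bool}.

Definition pxor (x y : point) : point := [ffun i => x i (+) y i].
Definition ones : point := [ffun => true].
Definition weight (x : point) : nat := #|[set i | x i]|.
Definition even_point (x : point) : bool := ~~ odd (weight x).
Definition odd_point (x : point) : bool := odd (weight x).

Definition upd (x : point) (j : V) (a : bool) : point :=
  [ffun i => if i == j then a else x i].

Variable f : point -> point.

Definition conjugate (x : point) : point := pxor (f x) x.

Definition self_dual : Prop := forall x, f (pxor x ones) = pxor (f x) ones.

Definition even_net : Prop :=
  forall y : point, (exists x, conjugate x = y) <-> even_point y.
Definition odd_net : Prop :=
  forall y : point, (exists x, conjugate x = y) <-> odd_point y.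

Definition even_self_dual : Prop := even_net /\ self_dual.
Definition odd_self_dual : Prop := odd_net /\ self_dual.

Definition pos_arc (j i : V) : Prop :=
  exists x, f (upd x j true) i = true /\ f (upd x j false) i = false.
Definition neg_arc (j i : V) : Prop :=
  exists x, f (upd x j true) i = false /\ f (upd x j false) i = true.
Definition arc (j i : V) : Prop := pos_arc j i \/ neg_arc j i.

Definition simple_graph : Prop := forall i j, ~ (pos_arc j i /\ neg_arc j i).

Definition and_net : Prop :=
  simple_graph /\
  forall (i : V) (x : point),
    f x i = true <->
    ((forall j, pos_arc j i -> x j = true) /\ (forall j, neg_arc j i -> x j = false)).

(* The sign parity of the
   cycle is the parity of the number of negative arcs. *)
Definition hamiltonian_cycle_graph (s : seq V) : Prop :=
  simple_graph /\ uniq s /\ (forall v, v \in s) /\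
  (forall j i, arc j i <-> i = next s j).

Definition neg_arc_tails (s : seq V) (N : {set V}) : Prop :=
  forall j, j \in N <-> neg_arc j (next s j).

Definition positive_circular : Prop :=
  exists (s : seq V) (N : {set V}),
    hamiltonian_cycle_graph s /\ neg_arc_tails s N /\ ~~ odd #|N|.
Definition negative_circular : Prop :=
  exists (s : seq V) (N : {set V}),
    hamiltonian_cycle_graph s /\ neg_arc_tails s N /\ odd #|N|.
End BN.

(* Main.v *)
Require Import Defs.
From mathcomp Require Import all_boot.
Set Implicit Arguments. Unset Strict Implicit. Unset Printing Implicit Defensive.

Section Proof6.
Variable V : finType.
Notation point := {ffun V -> bool}.
Definition zero : point := [ffun => false].
Definition delta (j : V) : point := [ffun v => v == j].
Definition parP (P : pred V) (z : point) : bool := \big[addb/false]_(i | P i) z i.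

Lemma parP_xor P x y : parP P (pxor x y) = parP P x (+) parP P y.
Proof.
rewrite /parP -big_split /=; apply: eq_bigr => i _; by rewrite ffunE.
Qed.

Lemma parP_delta P j : parP P (delta j) = P j.
Proof.
case Pj: (P j).
- rewrite /parP (bigD1 j) //= ffunE eqxx big1 // => i /andP[_ ij].
  by rewrite ffunE (negbTE ij).
- rewrite /parP big1 // => i Pi; rewrite ffunE; apply/negbTE.
  by apply: contraTneq Pi => ->; rewrite Pj.
Qed.

Lemma parP_comp P (g : V -> V) (z : point) : injective g -> (forall i, P (g i) = P i) ->
  parP P [ffun i => z (g i)] = parP P z.
Proof.
move=> ig Pg; rewrite /parP [RHS](reindex_inj ig) /=.
by apply: eq_big => i; rewrite ?Pg // ffunE.
Qed.

Lemma odd_weight z : odd (weight z) = parP predT z.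
Proof.
rewrite /weight -sum1_card big_mkcond /=.
rewrite (big_morph odd oddD (erefl (odd 0))).
by apply: eq_bigr => i _; rewrite inE; case: (z i).
Qed.

Variable f : point -> point.

Section Struct.
Variables (p : V -> V) (b : point).
Hypothesis H : forall x i, f x i = x (p i) (+) b i.

Lemma struct_pos j i : pos_arc f j i <-> j = p i /\ b i = false.
Proof.
split.
- case=> x []; rewrite !H !ffunE.
  case: (p i =P j) => [<-|_]; first by case: (b i).
  by move=> ->.
- case=> -> bi; exists zero; by rewrite !H !ffunE eqxx bi.
Qed.

Lemma struct_neg j i : neg_arc f j i <-> j = p i /\ b i = true.
Proof.
split.
- case=> x []; rewrite !H !ffunE.
  case: (p i =P j) => [<-|_]; first by case: (b i).
  by move=> ->.
- case=> -> bi; exists zero; by rewrite !H !ffunE eqxx bi.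
Qed.

Lemma struct_arc j i : Defs.arc f j i <-> j = p i.
Proof.
split.
- by case=> [/struct_pos|/struct_neg] [].
- move=> ->; case bi: (b i); [right; apply/struct_neg|left; apply/struct_pos]; by [].
Qed.

Lemma struct_simple : simple_graph f.
Proof. by move=> i j [/struct_pos [_ e1] /struct_neg [_ e2]]; rewrite e1 in e2. Qed.

Lemma struct_and : and_net f.
Proof.
split; first exact: struct_simple.
move=> i x; rewrite H; split.
- move=> e; split=> j; [move/struct_pos=> [-> bi]|move/struct_neg=> [-> bi]];
  move: e; rewrite bi; by case: (x (p i)).
- case=> hp hn; case bi: (b i).
  + by rewrite (hn (p i) (proj2 (struct_neg _ _) (conj erefl bi))).
  + by rewrite (hp (p i) (proj2 (struct_pos _ _) (conj erefl bi))).
Qed.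

Lemma struct_sd : self_dual f.
Proof.
move=> x; apply/ffunP=> i; rewrite !ffunE !H !ffunE.
by case: (x (p i)); case: (b i).
Qed.

Lemma conj_eq x : conjugate f x = pxor (pxor [ffun i => x (p i)] b) x.
Proof. by apply/ffunP => i; rewrite !ffunE H. Qed.

Lemma par_conj P x : injective p -> (forall i, P (p i) = P i) ->
  parP P (conjugate f x) = parP P b.
Proof.
move=> pinj Pp; rewrite conj_eq !parP_xor parP_comp //.
by rewrite addbAC addbb addFb.
Qed.

End Struct.

Lemma insens j i : ~ Defs.arc f j i -> forall x a, f (upd x j a) i = f x i.
Proof.
move=> na x a.
have e: f (upd x j true) i = f (upd x j false) i.
  case e1: (f (upd x j true) i); case e2: (f (upd x j false) i) => //;
  exfalso; apply: na; [left|right]; by exists x.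
have ux: upd x j (x j) = x by apply/ffunP=> v; rewrite ffunE; case: eqP => [->|].
transitivity (f (upd x j (x j)) i); last by rewrite ux.
by case: a; case: (x j).
Qed.

Lemma dep i p : (forall j, j != p -> ~ Defs.arc f j i) ->
  forall x y : point, x p = y p -> f x i = f y i.
Proof.
move=> H x y exy.
suff: forall l : seq V, forall x' : point, x' p = y p ->
  (forall j, j \notin l -> x' j = y j) -> f x' i = f y i.
  by move=> /(_ (enum V) x exy); apply => j; rewrite mem_enum.
elim=> [|j l IH] x' ep ag.
- have ->: x' = y by apply/ffunP => v; apply: ag.
  by [].
- case: (eqVneq j p) => [ejp|jp].
  + apply: IH => // v vl; case: (eqVneq v p) => [->//|vp]; apply: ag.
    by rewrite inE negb_or vl andbT ejp.
  + rewrite -(insens (H _ jp) x' (y j)); apply: IH.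
    * by rewrite ffunE eq_sym (negbTE jp).
    * move=> v vl; rewrite ffunE; case: eqP => [->//|/eqP vj]; apply: ag.
      by rewrite inE negb_or vj.
Qed.

Lemma form (p : V -> V) : (forall j i, Defs.arc f j i <-> j = p i) ->
  forall x i, f x i = x (p i) (+) f zero i.
Proof.
move=> Harc x i.
have nd: forall j, j != p i -> ~ Defs.arc f j i by move=> j /eqP jp /Harc.
have dp := dep nd.
have -> : f x i = f (upd zero (p i) (x (p i))) i by apply: dp; rewrite ffunE eqxx.
have [x' Hx']: exists x' : point, f (upd x' (p i) true) i != f (upd x' (p i) false) i.
  by case: (proj2 (Harc (p i) i) erefl) => [[x' [e1 e2]]|[x' [e1 e2]]];
  exists x'; rewrite e1 e2.
have e1: f (upd x' (p i) true) i = f (upd zero (p i) true) i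
  by apply: dp; rewrite !ffunE !eqxx.
have e2: f (upd x' (p i) false) i = f (upd zero (p i) false) i
  by apply: dp; rewrite !ffunE !eqxx.
have z: upd zero (p i) false = zero by apply/ffunP=> v; rewrite !ffunE; case: ifP.
rewrite e1 e2 z in Hx'.
case: (x (p i)); last by rewrite z.
by move: Hx'; case: (f _ i); case: (f zero i).
Qed.

Lemma surj (p q : V -> V) (b : point) (H : forall x i, f x i = x (p i) (+) b i)
  (pq : cancel p q) (qp : cancel q p) (v0 : V)
  (conn : forall v, fconnect q v0 v) (y : point) :
  parP predT y = parP predT b -> exists x, conjugate f x = y.
Proof.
move=> hy.
have qinj : injective q := can_inj qp.
pose c := pxor y b.
have hc : parP predT c = false by rewrite parP_xor hy addbb.
pose n := order q v0.
pose x : point := [ffun v => \big[addb/false]_(1 <= m < (findex q v0 v).+1) c (iter m q v0)].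
have key : forall j, x (q j) = x j (+) c (q j).
  move=> j; have cj := conn j.
  have kn : findex q v0 j < n := findex_max cj.
  have ej : iter (findex q v0 j) q v0 = j := iter_findex cj.
  case: (ltnP (findex q v0 j).+1 n) => [lt|hge].
  - have eqj: q j = iter (findex q v0 j).+1 q v0 by rewrite iterS ej.
    by rewrite !ffunE eqj findex_iter // big_nat_recr // /c ffunE.
  - have en : (findex q v0 j).+1 = n by apply/eqP; rewrite eqn_leq hge kn.
    have qj : q j = v0 by rewrite -ej -iterS en iter_order.
    rewrite !ffunE qj findex0 big_geq //.
    have T : \big[addb/false]_(0 <= m < n) c (iter m q v0) = false.
      transitivity (parP predT c); last exact: hc.
      rewrite /parP.
      have -> : \big[addb/false]_(i | predT i) c i = \big[addb/false]_(v <- orbit q v0) c v.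
        rewrite [RHS]big_uniq ?orbit_uniq //; apply: eq_bigl => v.
        by have := conn v; rewrite fconnect_orbit => ->.
      rewrite (big_nth v0) size_orbit; apply: eq_big_nat => m /andP[_ mn].
      by rewrite /orbit nth_traject.
    move: T; rewrite big_ltn ?order_gt0 //= -en => T.
    have cv0 : c v0 = y v0 (+) b v0 by rewrite ffunE.
    by rewrite -cv0 addbC T.
exists x; apply/ffunP => i.
rewrite /conjugate ffunE H.
have := key (p i); rewrite pq => ->.
rewrite /c !ffunE.
by case: (\big[addb/false]_(1 <= m < _) _); case: (y i); case: (b i).
Qed.

Definition arcb j i := [exists x, f (upd x j true) i != f (upd x j false) i].

Lemma arcbP j i : reflect (Defs.arc f j i) (arcb j i).
Proof.
apply: (iffP existsP) => [[x]|[[x [e1 e2]]|[x [e1 e2]]]]; last 2 first.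
- by exists x; rewrite e1 e2.
- by exists x; rewrite e1 e2.
case e1: (f (upd x j true) i); case e2: (f (upd x j false) i) => // _;
  [left|right]; by exists x.
Qed.

Lemma B_arcs : and_net f -> self_dual f ->
  exists p : V -> V, forall j i, Defs.arc f j i <-> j = p i.
Proof.
move=> [simp an] sd.
have kill: forall j i, Defs.arc f j i -> exists a, forall x : point, x j = a -> f x i = false.
  move=> j i [pa|na]; [exists false|exists true] => x xj;
  apply/negbTE/negP => /(an i x) [hp hn].
  + by move: (hp j pa); rewrite xj.
  + by move: (hn j na); rewrite xj.
have ex: forall i, exists j, Defs.arc f j i.
  move=> i; case: (pickP (fun j => arcb j i)) => [j /arcbP a|none]; first by exists j.
  exfalso.
  have allT: forall x, f x i = true.
    move=> x; apply/(an i x); split=> j h; exfalso; move/negP: (negbT (none j)); apply;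
    apply/arcbP; [left|right]; exact: h.
  have := f_equal (fun g : point => g i) (sd zero).
  by rewrite /= !ffunE !allT.
have un: forall i j1 j2, Defs.arc f j1 i -> Defs.arc f j2 i -> j1 = j2.
  move=> i j1 j2 a1 a2; case: (eqVneq j1 j2) => // ne; exfalso.
  have [c1 k1] := kill _ _ a1; have [c2 k2] := kill _ _ a2.
  pose x : point := [ffun v => if v == j1 then ~~ c1 else c2].
  have fx: f x i = false by apply: k2; rewrite ffunE eq_sym (negbTE ne).
  have fx1: f (pxor x (ones V)) i = false.
    by apply: k1; rewrite !ffunE eqxx addbT negbK.
  have := f_equal (fun g : point => g i) (sd x).
  by rewrite /= fx1 !ffunE fx.
pose p := fun i => odflt i [pick j | arcb j i].
have pa: forall i, Defs.arc f (p i) i.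
  move=> i; rewrite /p; case: pickP => [j /arcbP //|none]; exfalso.
  have [j a] := ex i; move/arcbP: a; by rewrite none.
exists p => j i; split => [a | ->]; [exact: un _ _ _ a (pa i) | exact: pa i].
Qed.

Lemma N_part (s : seq V) (Us : uniq s) (b : point)
  (H : forall x i, f x i = x (prev s i) (+) b i) :
  neg_arc_tails f s [set j | b (next s j)] /\
  odd #|[set j | b (next s j)]| = parP predT b.
Proof.
split.
- move=> j; rewrite inE; split => [bj|/(struct_neg H) [_ //]].
  by apply/(struct_neg H); rewrite prev_next.
- have -> : [set j | b (next s j)] = [set j | [ffun j => b (next s j)] j].
    by apply/setP => j; rewrite !inE ffunE.
  rewrite -/(weight _) odd_weight parP_comp //.
  exact: can_inj (prev_next Us).
Qed.

Lemma fwd (sgn : bool) (v0 : V) :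
  (exists s N, hamiltonian_cycle_graph f s /\ neg_arc_tails f s N /\ odd #|N| = sgn) ->
  (forall y, (exists x, conjugate f x = y) <-> odd (weight y) = sgn) /\
  self_dual f /\ and_net f.
Proof.
move=> [s [N [[simp [Us [Hs Harc]]] [HN hN]]]].
have Harc' : forall j i, Defs.arc f j i <-> j = prev s i.
  move=> j i; split => [/Harc -> | ->]; first by rewrite prev_next.
  by apply/Harc; rewrite next_prev.
have H := form Harc'.
have pinj : injective (prev s) := can_inj (next_prev Us).
have [tl hb] := N_part Us H.
have eN : N = [set j | f zero (next s j)].
  apply/setP => j; apply/idP/idP => [/HN /tl //|/tl /HN //].
rewrite eN hb in hN.
split; last by split; [exact: struct_sd H | exact: struct_and H].
move=> y; split => [[x <-]|hy].
- by rewrite odd_weight (par_conj H).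
- apply: (surj H (next_prev Us) (prev_next Us) (v0 := v0)) => [v|].
  + by rewrite (fconnect_cycle (cycle_next Us) (Hs v0)).
  + by rewrite -odd_weight hy hN.
Qed.

Lemma bwd (sgn : bool) (v0 : V) :
  (forall y, (exists x, conjugate f x = y) <-> odd (weight y) = sgn) ->
  self_dual f -> and_net f ->
  exists s N, hamiltonian_cycle_graph f s /\ neg_arc_tails f s N /\ odd #|N| = sgn.
Proof.
move=> Hnet sd an.
have [p Harc] := B_arcs an sd.
have H := form Harc.
set b := f zero in H.
have hpar : forall x, parP predT (conjugate f x) = sgn.
  by move=> x; rewrite -odd_weight; apply/Hnet; exists x.
have hb : parP predT b = sgn.
  rewrite -(hpar zero); apply: eq_bigr => i _; by rewrite !ffunE addbF.
have psurj : forall j, exists i, p i = j.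
  move=> j; have := hpar (delta j); rewrite (conj_eq H) !parP_xor hb parP_delta /=.
  case: (pickP (fun i => p i == j)) => [i /eqP e|none]; first by exists i.
  rewrite /parP big1 => [|i _]; last by rewrite !ffunE none.
  by case: sgn {Hnet hpar hb}.
pose q := fun j => odflt j [pick i | p i == j].
have qK : cancel q p.
  move=> j; rewrite /q; case: pickP => [i /eqP //|none]; exfalso.
  by have [i e] := psurj j; move: (none i); rewrite e eqxx.
have qinj : injective q := can_inj qK.
have [q' q'K Kq'] := injF_bij qinj.
have pK : cancel p q.
  by move=> i; rewrite -(Kq' i) qK.
have pinj : injective p := can_inj pK.
have conn : forall v, fconnect q v0 v.
  move=> v; case Cv: (fconnect q v0 v) => //; exfalso.
  pose C := fconnect q v0.
  have Cp : forall i, C (p i) = C i.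
    move=> i; apply/idP/idP => ci.
    - by rewrite -[i]pK; apply: connect_trans ci (fconnect1 q _).
    - apply: connect_trans ci _; rewrite fconnect_sym //.
      by rewrite -{2}(pK i); apply: fconnect1.
  pose y := pxor b (pxor (delta v0) (delta v)).
  have [x ex] : exists x, conjugate f x = y.
    apply/Hnet; rewrite odd_weight /y !parP_xor !parP_delta hb.
    by case: sgn {Hnet hpar hb}.
  have := par_conj H x pinj Cp; rewrite ex /y !parP_xor !parP_delta.
  have -> : C v0 by exact: connect0.
  rewrite /C Cv.
  by case: (parP _ b).
pose s := orbit q v0.
have Us : uniq s := orbit_uniq q v0.
have Hs : forall v, v \in s by move=> v; rewrite -fconnect_orbit.
have nextq : forall j, next s j = q j.
  by move=> j; apply: nextE (Hs j); exact: cycle_orbit.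
have Hn : forall x i, f x i = x (prev s i) (+) b i.
  move=> x i; rewrite H; congr (x _ (+) _).
  by rewrite -{1}(next_prev Us i) nextq qK.
have [tl hN] := N_part Us Hn.
exists s, [set j | b (next s j)]; split; last by split; [exact: tl|rewrite hN].
split; first exact: struct_simple Hn.
split; first exact: Us.
split; first exact: Hs.
move=> j i; rewrite nextq; split => [/Harc ->|->]; first by rewrite pK.
by apply/Harc; rewrite qK.
Qed.

End Proof6.
Lemma iffb1 (P : Prop) (c : bool) : (P <-> ~~ c) -> (P <-> c = false).
Proof. case: c => /= [[h1 h2]|[h1 h2]]; split => // x; [by move: (h1 x)|exact: h2]. Qed.
Lemma iffb2 (P : Prop) (c : bool) : (P <-> c = false) -> (P <-> ~~ c).
Proof. case: c => /= [[h1 h2]|[h1 h2]]; split => // x; [by move: (h1 x)|exact: h2]. Qed.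
Lemma iffb3 (P : Prop) (c : bool) : (P <-> c) -> (P <-> c = true).
Proof. by case: c => /= [[h1 h2]|[h1 h2]]; split. Qed.
Lemma iffb4 (P : Prop) (c : bool) : (P <-> c = true) -> (P <-> c).
Proof. by case: c => /= [[h1 h2]|[h1 h2]]; split. Qed.

Theorem proposition6 (V : finType) (hV : 0 < #|V|)
  (f : {ffun V -> bool} -> {ffun V -> bool}) :
  (positive_circular f <-> even_self_dual f /\ and_net f) /\
  (negative_circular f <-> odd_self_dual f /\ and_net f).
Proof.
have [v0 _] := card_gt0P hV.
split; split.
- move=> [s [N [h [t e]]]].
  have [net [sd an]] := @fwd V f false v0 (ex_intro _ s (ex_intro _ N (conj h (conj t (negbTE e))))).
  split => //; split => // y; apply: iffb2; exact: net.
- move=> [[net sd] an].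
  have net' : forall y, (exists x, conjugate f x = y) <-> odd (weight y) = false.
    by move=> y; apply: iffb1; exact: net.
  have [s [N [h [t e]]]] := bwd v0 net' sd an.
  by exists s, N; rewrite e.
- move=> [s [N [h [t e]]]].
  have [net [sd an]] := @fwd V f true v0 (ex_intro _ s (ex_intro _ N (conj h (conj t e)))).
  split => //; split => // y; apply: iffb4; exact: net.
- move=> [[net sd] an].
  have net' : forall y, (exists x, conjugate f x = y) <-> odd (weight y) = true.
    by move=> y; apply: iffb3; exact: net.
  have [s [N [h [t e]]]] := bwd v0 net' sd an.
  by exists s, N; rewrite e.
Qed.
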